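(* Let $\mathbf{Y}\sim\mathcal{MMN}_p(\boldsymbol{\xi},\mathbf{\Omega},\boldsymbol{\delta};H)$, let $\mathbf{A}$ be a full-rank $p\times h$ matrix with $h\le p$, and let $\mathbf{c}\in\mathbb{R}^h$. Then $\mathbf{T}=\mathbf{c}+\mathbf{A}^\top\mathbf{Y}\sim\mathcal{MMN}_h(\boldsymbol{\xi}_{\mathbf{T}},\mathbf{\Omega}_{\mathbf{T}},\boldsymbol{\delta}_{\mathbf{T}};H)$, where $\boldsymbol{\xi}_{\mathbf{T}}=\mathbf{c}+\mathbf{A}^\top\boldsymbol{\xi}$, $\mathbf{\Omega}_{\mathbf{T}}=\mathbf{A}^\top\mathbf{\Omega}\mathbf{A}$, and $\boldsymbol{\delta}_{\mathbf{T}}=\boldsymbol{\omega}_{\mathbf{T}}^{-1}\mathbf{A}^\top\boldsymbol{\omega}\boldsymbol{\delta}$ with $\boldsymbol{\omega}_{\mathbf{T}}=(\mathbf{\Omega}_{\mathbf{T}}\odot\mathbf{I}_h)^{1/2}$.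
   Context: For $d\ge1$, $\boldsymbol{\xi}\in\mathbb{R}^d$, a $d\times d$ symmetric positive definite $\mathbf{\Omega}$, put $\boldsymbol{\omega}=(\mathbf{\Omega}\odot\mathbf{I}_d)^{1/2}=\mathrm{diag}(\mathbf{\Omega}_{11}^{1/2},\dots,\mathbf{\Omega}_{dd}^{1/2})$ ($\odot$ = Hadamard product) and $\overline{\mathbf{\Omega}}=\boldsymbol{\omega}^{-1}\mathbf{\Omega}\boldsymbol{\omega}^{-1}$; let $\boldsymbol{\delta}\in\mathbb{R}^d$ with $\overline{\mathbf{\Omega}}-\boldsymbol{\delta}\boldsymbol{\delta}^\top$ positive definite. For a real random variable $U$ with CDF $H$ and $\mathbf{Z}\sim\mathcal{N}_d(\mathbf{0},\overline{\mathbf{\Omega}}-\boldsymbol{\delta}\boldsymbol{\delta}^\top)$ independent of $U$, the law of $\boldsymbol{\xi}+\boldsymbol{\omega}(\boldsymbol{\delta}U+\mathbf{Z})$ is denoted $\mathcal{MMN}_d(\boldsymbol{\xi},\mathbf{\Omega},\boldsymbol{\delta};H)$. In the claim $\boldsymbol{\omega}$ refers to $\mathbf{\Omega}$ (dimension $p$). *)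

(* Defs.v *)
From HB Require Import structures.
From mathcomp Require Import all_boot all_order all_algebra.
From mathcomp Require Import all_classical all_reals all_analysis.
Set Implicit Arguments. Unset Strict Implicit. Unset Printing Implicit Defensive.
Import Order.TTheory GRing.Theory Num.Theory.
Local Open Scope classical_set_scope.
Local Open Scope ring_scope.

Section MMN.
Variable R : realType.

(* omega = (Omega o I_d)^{1/2} = diag(Omega_11^{1/2}, ..., Omega_dd^{1/2}) *)
Definition omega_of d (Om : 'M[R]_d) : 'M[R]_d :=
  diag_mx (\row_i Num.sqrt (Om i i)).

Definition Ombar d (Om : 'M[R]_d) : 'M[R]_d :=
  invmx (omega_of Om) *m Om *m invmx (omega_of Om).

Definition posdef d (M : 'M[R]_d) : Prop :=
  forall x : 'cV[R]_d, x != 0 -> 0 < (x^T *m M *m x) 0 0.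

Definition sym_posdef d (M : 'M[R]_d) : Prop := M^T = M /\ posdef M.

Definition rvec_meas (dT : measure_display) (T : measurableType dT) d
  (X : T -> 'cV[R]_d) : Prop :=
  forall i : 'I_d, measurable_fun setT (fun w => X w i 0).

Definition rect_ev (dT : measure_display) (T : measurableType dT) d
  (X : T -> 'cV[R]_d) (B : 'I_d -> set R) : set T :=
  [set w | forall i, B i (X w i 0)].

(* equality of laws on R^d (agreement on the generating pi-system of
   measurable rectangles) *)
Definition law_eq (dT : measure_display) (T : measurableType dT)
  (P : probability T R) (dT' : measure_display) (T' : measurableType dT')
  (Q : probability T' R) d (X : T -> 'cV[R]_d) (Y : T' -> 'cV[R]_d) : Prop :=
  forall B : 'I_d -> set R, (forall i, measurable (B i)) ->
    P (rect_ev X B) = Q (rect_ev Y B).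

Definition indep_rv_rvec (dT : measure_display) (T : measurableType dT)
  (P : probability T R) (U : T -> R) d (Z : T -> 'cV[R]_d) : Prop :=
  forall (A : set R) (B : 'I_d -> set R), measurable A ->
    (forall i, measurable (B i)) ->
    P (U @^-1` A `&` rect_ev Z B) = (P (U @^-1` A) * P (rect_ev Z B))%E.

Definition has_cdf (dT : measure_display) (T : measurableType dT)
  (P : probability T R) (U : T -> R) (H : R -> R) : Prop :=
  forall s : R, P (U @^-1` `]-oo, s]) = (H s)%:E.

Definition is_normal (dT : measure_display) (T : measurableType dT)
  (P : probability T R) (X : T -> R) (m v : R) : Prop :=
  forall A : set R, measurable A -> P (X @^-1` A) = normal_prob m (Num.sqrt v) A.

(* Z ~ N_d(mu, S): every nonzero linear combination a^T Z is
   N(a^T mu, a^T S a)  (S positive definite in all uses) *)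
Definition is_gaussian (dT : measure_display) (T : measurableType dT)
  (P : probability T R) d (Z : T -> 'cV[R]_d) (mu : 'cV[R]_d) (S : 'M[R]_d)
  : Prop :=
  forall a : 'cV[R]_d, a != 0 ->
    is_normal P (fun w => (a^T *m Z w) 0 0) ((a^T *m mu) 0 0)
      ((a^T *m S *m a) 0 0).

Arguments law_eq {dT T} P {dT' T'} Q {d} X Y.

Definition is_MMN (dT : measure_display) (T : measurableType dT)
  (P : probability T R) d (Y : T -> 'cV[R]_d) (xi : 'cV[R]_d)
  (Om : 'M[R]_d) (delta : 'cV[R]_d) (H : R -> R) : Prop :=
  sym_posdef Om /\ posdef (Ombar Om - delta *m delta^T) /\ rvec_meas Y /\
  exists (dQ : measure_display) (TQ : measurableType dQ)
         (Q : probability TQ R) (U : TQ -> R) (Z : TQ -> 'cV[R]_d),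
    measurable_fun setT U /\ rvec_meas Z /\ has_cdf Q U H /\
    is_gaussian Q Z 0 (Ombar Om - delta *m delta^T) /\
    indep_rv_rvec Q U Z /\
    law_eq P Q Y (fun w => xi + omega_of Om *m (U w *: delta + Z w)).

End MMN.

(* Main.v *)
Require Import Defs.
From HB Require Import structures.
From mathcomp Require Import all_boot all_order all_algebra.
From mathcomp Require Import all_classical all_reals all_analysis.
From mathcomp Require Import measurable_realfun.
Import Order.TTheory GRing.Theory Num.Theory.
Local Open Scope classical_set_scope.
Local Open Scope ring_scope.

Section Aux.
Variable R : realType.

Definition vT d := 'cV[R]_d.
HB.instance Definition _ d := Choice.on (vT d).
HB.instance Definition _ d := isPointed.Build (vT d) 0.
Definition rects d : set (set (vT d)) :=
  [set S | exists B : 'I_d -> set R, (forall i, measurable (B i)) /\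
     S = [set v : 'cV[R]_d | forall i, B i (v i 0%R)]].
Definition mT d := g_sigma_algebraType (rects d).

Lemma coord_meas_mT (dT : measure_display) (T : measurableType dT) d
  (X : T -> mT d) :
  (forall i : 'I_d, measurable_fun setT (fun w => (X w : 'cV[R]_d) i 0)) ->
  measurable_fun setT X.
Proof.
move=> mX; apply: (@measurability _ _ T (mT d) setT X (rects d)) => //.
move=> _ [_ [B [mB ->]] <-].
have -> : setT `&` X @^-1` [set v : 'cV[R]_d | forall i, B i (v i 0%R)] =
  \bigcap_(i in setT) (setT `&` (fun w => (X w : 'cV[R]_d) i 0) @^-1` B i).
  by apply/seteqP; split => [w [_ /= h] i _|w /= h]; [split|split => // i; case: (h i I)].
apply: fin_bigcap_measurable => //.
by move=> i _; apply: mX.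
Qed.

Lemma proj_meas d (i : 'I_d) :
  measurable_fun setT (fun v : mT d => (v : 'cV[R]_d) i 0).
Proof.
move=> _ B' mB'; rewrite setTI; apply: sub_sigma_algebra.
exists (fun j => if j == i then B' else setT); split.
  by move=> j; case: ifP.
apply/seteqP; split => [v /= h j|v /= /(_ i)]; last by rewrite eqxx.
by case: ifP => // /eqP ->.
Qed.

Lemma affine_meas d h (M : 'M[R]_(h, d)) (c : 'cV[R]_h) :
  measurable_fun setT (fun v : mT d => (c + M *m (v : 'cV[R]_d) : mT h)).
Proof.
apply: coord_meas_mT => i.
have -> : (fun w : mT d => (c + M *m (w : 'cV[R]_d)) i 0) =
  (fun w => c i 0 + \sum_j (M i j * (w : 'cV[R]_d) j 0)).
  by apply/funext => w; rewrite !mxE.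
apply: measurable_funD => //; apply: measurable_sum => j.
by apply: measurable_funM => //; exact: proj_meas.
Qed.

Lemma rects_unique d (m1 m2 : {measure set (mT d) -> \bar R}) :
  (m1 setT < +oo)%E ->
  (forall B : 'I_d -> set R, (forall i, measurable (B i)) ->
     m1 [set v : 'cV[R]_d | forall i, B i (v i 0%R)] =
     m2 [set v : 'cV[R]_d | forall i, B i (v i 0%R)]) ->
  forall S, measurable S -> m1 S = m2 S.
Proof.
move=> m1oo h S mS.
apply: (@measure_unique _ _ (mT d) (rects d) (fun _ => setT)) => //.
- move=> _ _ [B [mB ->]] [B' [mB' ->]].
  exists (fun i => B i `&` B' i); split; first by move=> i; exact: measurableI.
  by apply/seteqP; split => v /=; [move=> [h1 h2] i; split|move=> hh; split => i; case: (hh i)].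
- move=> _; exists (fun _ => setT); split => //.
  by apply/seteqP; split.
- by rewrite bigcup_const.
- by move=> _ [B [mB ->]]; exact: h.
Qed.


Lemma law_transport (dT : measure_display) (T : measurableType dT)
  (P : probability T R) (dT' : measure_display) (T' : measurableType dT')
  (Q : probability T' R) d (X : T -> 'cV[R]_d) (Y : T' -> 'cV[R]_d) :
  rvec_meas X -> rvec_meas Y -> law_eq P Q X Y ->
  forall S : set (mT d), measurable S -> P (X @^-1` S) = Q (Y @^-1` S).
Proof.
move=> mX mY hl S mS.
have mX' : measurable_fun setT (X : T -> mT d) by apply: coord_meas_mT.
have mY' : measurable_fun setT (Y : T' -> mT d) by apply: coord_meas_mT.
have := @rects_unique d (pushforward P (X : T -> mT d)) (pushforward Q (Y : T' -> mT d)) _ _ S mS.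
apply.
- change (P (X @^-1` setT) < +oo)%E; by rewrite preimage_setT probability_setT ltry.
- by move=> B mB; exact: hl.
Qed.

Lemma indep_transport (dT : measure_display) (T : measurableType dT)
  (Q : probability T R) (U : T -> R) d (Z : T -> 'cV[R]_d) :
  measurable_fun setT U -> rvec_meas Z -> indep_rv_rvec Q U Z ->
  forall (A : set R) (S : set (mT d)), measurable A -> measurable S ->
  Q (U @^-1` A `&` Z @^-1` S) = (Q (U @^-1` A) * Q (Z @^-1` S))%E.
Proof.
move=> mU mZ hi A S mA mS.
have mZ' : measurable_fun setT (Z : T -> mT d) by apply: coord_meas_mT.
have mUA : measurable (U @^-1` A) by rewrite -[U @^-1` A]setTI; exact: mU.
have r0 : (0 <= fine (Q (U @^-1` A)))%R by apply: fine_ge0; exact: measure_ge0.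
pose r : {nonneg R} := NngNum r0.
have hr : (r%:num)%:E = Q (U @^-1` A).
  by rewrite /= fineK // fin_num_measure.
have := @rects_unique d (pushforward (mrestr Q mUA) (Z : T -> mT d)) (mscale r (pushforward Q (Z : T -> mT d))) _ _ S mS.
move=> H0.
have -> : (Q (U @^-1` A) * Q (Z @^-1` S))%E = mscale r (pushforward Q (Z : T -> mT d)) S.
  by rewrite /mscale hr.
rewrite setIC; apply: H0.
- change (Q (Z @^-1` setT `&` U @^-1` A) < +oo)%E.
  by rewrite preimage_setT setTI (le_lt_trans (probability_le1 _ _)) ?ltry.
- move=> B mB.
  change (Q (Z @^-1` [set v : 'cV[R]_d | forall i, B i (v i 0%R)] `&` U @^-1` A) =
    (r%:num)%:E * Q (Z @^-1` [set v : 'cV[R]_d | forall i, B i (v i 0%R)]))%E.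
  by rewrite hr setIC; exact: hi.
Qed.


Lemma rvec_meas_lin (dT : measure_display) (T : measurableType dT) d h
  (M : 'M[R]_(h, d)) (X : T -> 'cV[R]_d) :
  rvec_meas X -> rvec_meas (fun w => M *m X w).
Proof.
move=> mX i.
have -> : (fun w => (M *m X w) i 0) = (fun w => \sum_j (M i j * X w j 0)).
  by apply/funext => w; rewrite !mxE.
apply: measurable_sum => j; apply: measurable_funM => //; exact: mX.
Qed.

Lemma rvec_meas_add (dT : measure_display) (T : measurableType dT) d
  (X Y : T -> 'cV[R]_d) :
  rvec_meas X -> rvec_meas Y -> rvec_meas (fun w => X w + Y w).
Proof.
move=> mX mY i.
have -> : (fun w => (X w + Y w) i 0) = (fun w => X w i 0 + Y w i 0).
  by apply/funext => w; rewrite !mxE.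
by apply: measurable_funD; [exact: mX|exact: mY].
Qed.

Lemma rvec_meas_cst (dT : measure_display) (T : measurableType dT) d
  (v : 'cV[R]_d) : rvec_meas (fun _ : T => v).
Proof. by move=> i; exact: measurable_cst. Qed.

Lemma rvec_meas_scale (dT : measure_display) (T : measurableType dT) d
  (U : T -> R) (v : 'cV[R]_d) :
  measurable_fun setT U -> rvec_meas (fun w => U w *: v).
Proof.
move=> mU i.
have -> : (fun w => (U w *: v) i 0) = (fun w => U w * v i 0).
  by apply/funext => w; rewrite !mxE.
by apply: measurable_funM => //.
Qed.

Lemma quad_e d (Om : 'M[R]_d) i :
  ((delta_mx i 0 : 'cV[R]_d)^T *m Om *m (delta_mx i 0 : 'cV[R]_d)) 0 0 = Om i i.
Proof. by rewrite trmx_delta -rowE -colE !mxE. Qed.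

Lemma diag_pos d (Om : 'M[R]_d) : posdef Om -> forall i, 0 < Om i i.
Proof.
move=> hP i; rewrite -quad_e; apply: hP.
apply/eqP => /matrixP /(_ i 0); rewrite !mxE !eqxx /= => /eqP.
by rewrite oner_eq0.
Qed.

Lemma omega_unit d (Om : 'M[R]_d) : (forall i, 0 < Om i i) ->
  omega_of Om \in unitmx.
Proof.
move=> hp; rewrite unitmxE det_diag unitfE; apply/prodf_neq0 => i _.
by rewrite mxE gt_eqF // sqrtr_gt0.
Qed.

Lemma fullcol p h (A : 'M[R]_(p, h)) : \rank A = h ->
  forall x : 'cV[R]_h, A *m x = 0 -> x = 0.
Proof.
move=> rA x Ax.
have rf : row_free A^T by rewrite /row_free mxrank_tr rA.
have : x^T *m A^T = 0 *m A^T by rewrite -trmx_mul Ax trmx0 mul0mx.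
by move/(row_free_inj rf) => /(congr1 trmx); rewrite trmxK trmx0.
Qed.

End Aux.
Arguments diag_pos {R d Om}.
Arguments omega_unit {R d Om}.
Arguments fullcol {R p h A}.
Arguments rvec_meas_lin {R dT T d h M X}.
Arguments rvec_meas_add {R dT T d X Y}.
Arguments rvec_meas_cst {R dT T d v}.
Arguments rvec_meas_scale {R dT T d U v}.
Arguments law_transport {R dT T P dT' T' Q d X Y}.
Arguments indep_transport {R dT T Q U d Z}.

Theorem theorem4 (R : realType) (dT : measure_display) (T : measurableType dT)
  (P : probability T R) (p h : nat) (Y : T -> 'cV[R]_p) (xi : 'cV[R]_p)
  (Om : 'M[R]_p) (delta : 'cV[R]_p) (H : R -> R)
  (A : 'M[R]_(p, h)) (c : 'cV[R]_h) :
  (h <= p)%N -> \rank A = h ->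
  is_MMN P Y xi Om delta H ->
  is_MMN P (fun w => c + A^T *m Y w) (c + A^T *m xi) (A^T *m Om *m A)
    (invmx (omega_of (A^T *m Om *m A)) *m A^T *m omega_of Om *m delta) H.
Proof.
move=> hp rA [[OmS OmP] [SP [mY [dQ [TQ [Q [U [Z [mU [mZ [hH [gZ [iUZ law]]]]]]]]]]]]].
set w := omega_of Om.
set OmT := A^T *m Om *m A.
set wT := omega_of OmT.
set M := invmx wT *m A^T *m w.
have wU : w \in unitmx := omega_unit (diag_pos OmP).
have fcr := fullcol rA.
have OmTP : posdef OmT.
  move=> x x0; have Ax0 : A *m x != 0 by apply: contra x0 => /eqP /fcr ->.
  by have := OmP _ Ax0; rewrite /OmT trmx_mul !mulmxA.
have wTU : wT \in unitmx := omega_unit (diag_pos OmTP).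
have wsym : w^T = w by rewrite tr_diag_mx.
have wTsym : (invmx wT)^T = invmx wT by rewrite trmx_inv tr_diag_mx.
have MT : M^T = w *m A *m invmx wT by rewrite /M !trmx_mul trmxK wsym wTsym mulmxA.
have MTinj : forall a : 'cV[R]_h, a != 0 -> M^T *m a != 0.
  move=> a a0; apply: contra a0 => /eqP h0.
  have h1 : A *m (invmx wT *m a) = 0.
    by rewrite -(mulKmx wU (A *m _)) (mulmxA w A) (mulmxA (w *m A)) -MT h0 mulmx0.
  by rewrite -(mulKVmx wTU a) (fcr _ h1) mulmx0.
have K1 m (X : 'M[R]_(m, p)) : X *m w *m invmx w = X by rewrite mulmxK.
have K2 m (X : 'M[R]_(m, p)) : X *m invmx w *m w = X by rewrite mulmxKV.
set S := Ombar Om - delta *m delta^T.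
set dT' := invmx wT *m A^T *m w *m delta.
have dTE : dT' = M *m delta by [].
have STE : Ombar OmT - dT' *m dT'^T = M *m S *m M^T.
  rewrite /S mulmxBr mulmxBl dTE trmx_mul -!mulmxA; congr (_ - _).
  rewrite MT /Ombar /M -/w /OmT !mulmxA K1 K2 //.
have quad (a : 'cV[R]_h) :
  ((M^T *m a)^T *m S *m (M^T *m a)) = a^T *m (M *m S *m M^T) *m a.
  by rewrite trmx_mul trmxK !mulmxA.
split.
  split; last exact: OmTP.
  by rewrite /OmT !trmx_mul trmxK OmS mulmxA.
split.
  by move=> x x0; rewrite STE -quad; apply: SP; exact: MTinj.
split.
  apply: rvec_meas_add; first exact: rvec_meas_cst.
  exact: rvec_meas_lin.
exists dQ, TQ, Q, U, (fun x => M *m Z x).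
split; first exact: mU.
split; first exact: rvec_meas_lin.
split; first exact: hH.
split.
  move=> a a0; have := gZ _ (MTinj a a0).
  rewrite !mulmx0 STE -quad.
  have -> : (fun x => (a^T *m (M *m Z x)) 0 0) = (fun x => ((M^T *m a)^T *m Z x) 0 0).
    by apply/funext => x; rewrite trmx_mul trmxK mulmxA.
  by [].
split.
  move=> A' B mA' mB.
  have mg := @affine_meas R p h M 0.
  have -> : rect_ev (fun x => M *m Z x) B =
    Z @^-1` ((fun v : mT R p => (0 + M *m (v : 'cV[R]_p) : mT R h)) @^-1`
      [set v : 'cV[R]_h | forall i, B i (v i 0)]).
    by apply/seteqP; split => x /=; rewrite add0r.
  apply: indep_transport => //.
  rewrite -[X in measurable X]setTI; apply: mg => //.
  by apply: sub_sigma_algebra; exists B.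
move=> B mB.
set Yt := fun x => xi + w *m (U x *: delta + Z x).
have mYt : rvec_meas Yt.
  apply: rvec_meas_add; first exact: rvec_meas_cst.
  apply: rvec_meas_lin; apply: rvec_meas_add => //.
  exact: rvec_meas_scale.
have -> : (fun x => c + A^T *m xi + wT *m (U x *: dT' + M *m Z x)) =
   (fun x => c + A^T *m Yt x).
  apply/funext => x; rewrite /Yt dTE scalemxAr -mulmxDr /M -!mulmxA mulKVmx //.
  by rewrite [in RHS]mulmxDr addrA.
have mg := @affine_meas R p h A^T c.
have E (X : _ -> 'cV[R]_p) : rect_ev (fun x => c + A^T *m X x) B =
    X @^-1` ((fun v : mT R p => (c + A^T *m (v : 'cV[R]_p) : mT R h)) @^-1`
      [set v : 'cV[R]_h | forall i, B i (v i 0)]) by [].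
rewrite !E; apply: law_transport => //.
rewrite -[X in measurable X]setTI; apply: mg => //.
by apply: sub_sigma_algebra; exists B.
Qed.
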